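(* Let $f=a_0+a_1 z+\cdots+a_mz^m\in \mathbb{Z}[z]$ be primitive (the greatest common divisor of its coefficients is $1$). Suppose there exist positive real numbers $\alpha<\beta$ and an index $j\in\{0,1,\ldots,m\}$ such that \[ |a_j|\alpha^j >\left(\frac{\beta}{\alpha}\right)^{m-j}\sum_{i=0,\, i\neq j}^m |a_i|\alpha^i. \] Further, suppose there exist natural numbers $n$, $d$, $k$, $\ell\leq m$, and a prime $p$ with $p\nmid d$ such that $\beta-d\geq n\geq \alpha+d$, $f(n)=\pm p^k d$, $\gcd(k,\ell)=1$, $p^k$ divides $\frac{f^{(i)}(n)}{i!}$ for each $i=0, 1, \ldots,\ell-1$, and, in case $k>1$, also $p\nmid \frac{f^{(\ell)}(n)}{\ell!}$. Then $f$ is irreducible in $\mathbb{Z}[z]$.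
   Context: $f^{(i)}$ denotes the $i$-th derivative of $f$ with respect to $z$. Natural numbers are positive integers. *)

(* Defs.v *)
From HB Require Import structures.
From mathcomp Require Import all_boot all_order all_algebra.
Set Implicit Arguments. Unset Strict Implicit. Unset Printing Implicit Defensive.
Import Order.TTheory GRing.Theory Num.Theory.
Local Open Scope ring_scope.

Definition primitive_int (f : {poly int}) : Prop :=
  (\big[gcdn/0%N]_(i < size f) absz (f`_i)%R)%N = 1%N.

Definition irreducible_Zpoly (f : {poly int}) : Prop :=
  [/\ f != 0, f \isn't a GRing.unit &
      forall g h : {poly int}, f = g * h -> g \is a GRing.unit \/ h \is a GRing.unit].

(* Main.v *)
Require Import Defs.
From HB Require Import structures.
From mathcomp Require Import all_boot all_order all_algebra.
From mathcomp Require Import all_field.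
From mathcomp Require Import zify ring lra.
Import Order.TTheory GRing.Theory Num.Theory.
Local Open Scope ring_scope.

Lemma coef_shift (R : comNzRingType) (q : {poly R}) (c : R) i :
  (q \Po ('X + c%:P))`_i = (q^`N(i)).[c].
Proof.
have e : q \Po ('X + c%:P) = \poly_(i < size q) (q^`N(i)).[c].
  rewrite /comp_poly addrC nderiv_taylor; last exact: mulrC.
  rewrite poly_def size_map_polyC; apply: eq_bigr => j _.
  by rewrite nderivn_map horner_map /= mul_polyC.
rewrite e coef_poly; case: ltnP => // h.
by rewrite nderivn_poly0 ?horner0.
Qed.


Lemma exists_best (q : {poly int}) (W : nat -> int -> nat) : q != 0 ->
  exists b, [/\ q`_b != 0, (forall i, q`_i != 0 -> leq (W b q`_b) (W i q`_i)) &
     (forall i, (b < i)%N -> q`_i != 0 -> leq (W b q`_b).+1 (W i q`_i))].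
Proof.
move=> q0.
pose P m := [exists i : 'I_(size q), (q`_i != 0) && (W i q`_i == m)].
have exP : exists m, P m.
  exists (W (size q).-1 q`_(size q).-1); apply/existsP.
  have hs : ((size q).-1 < size q)%N by rewrite prednK // size_poly_gt0.
  exists (Ordinal hs) => /=; rewrite eqxx andbT.
  by rewrite -lead_coefE lead_coef_eq0.
case: (ex_minnP exP) => mn /existsP [i0 /andP [nz0 /eqP w0]] minP.
pose Q i := (q`_i != 0) && (W i q`_i == mn).
have exQ : exists i, Q i by exists i0; rewrite /Q nz0 w0 eqxx.
have ubQ : forall i, Q i -> (i <= size q)%N.
  move=> i /andP [nz _]; apply: ltnW; rewrite ltnNge; apply: contra nz.
  by move=> /(nth_default 0) ->.
case: (ex_maxnP exQ ubQ) => b /andP [nzb /eqP wb] maxQ.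
exists b; split => //.
- move=> i nzi; rewrite wb; apply: minP; apply/existsP.
  have hi : (i < size q)%N.
    rewrite ltnNge; apply: contra nzi; by move=> /(nth_default 0) ->.
  by exists (Ordinal hi); rewrite /= nzi eqxx.
- move=> i bi nzi; rewrite wb ltn_neqAle.
  have -> : leq mn (W i q`_i).
    apply: minP; apply/existsP.
    have hi : (i < size q)%N.
      rewrite ltnNge; apply: contra nzi; by move=> /(nth_default 0) ->.
    by exists (Ordinal hi); rewrite /= nzi eqxx.
  rewrite andbT; apply/eqP => e.
  have : (i <= b)%N by apply: maxQ; rewrite /Q nzi -e eqxx.
  by rewrite leqNgt bi.
Qed.

Section Padic.
Variables (p k l : nat).
Hypothesis pr : prime p.

Definition vp (x : int) := logn p `|x|.
Definition wt (i : nat) (x : int) := (l * vp x + k * i)%N.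

Lemma vpM x y : x != 0 -> y != 0 -> vp (x * y) = (vp x + vp y)%N.
Proof. by move=> hx hy; rewrite /vp abszM lognM // absz_gt0. Qed.

Lemma dvd_vp e x : x != 0 -> (((p ^ e)%N)%:Z %| x)%Z = (e <= vp x)%N.
Proof. by move=> hx; rewrite dvdzE /= pfactor_dvdn // absz_gt0. Qed.

Variables (G H : {poly int}) (bG bH : nat).
Hypothesis (nzG : G`_bG != 0) (nzH : H`_bH != 0).
Hypothesis minG : forall i, G`_i != 0 -> leq (wt bG G`_bG) (wt i G`_i).
Hypothesis minH : forall i, H`_i != 0 -> leq (wt bH H`_bH) (wt i H`_i).
Hypothesis maxG : forall i, (bG < i)%N -> G`_i != 0 -> leq (wt bG G`_bG).+1 (wt i G`_i).
Hypothesis maxH : forall i, (bH < i)%N -> H`_i != 0 -> leq (wt bH H`_bH).+1 (wt i H`_i).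

Lemma term_bound M i : (bG + bH <= M)%N -> (i <= M)%N ->
  (i != bG) || (M != bG + bH) -> G`_i != 0 -> H`_(M - i) != 0 ->
  (wt bG G`_bG + wt bH H`_bH < l * (vp G`_i + vp H`_(M - i)) + k * M)%N.
Proof.
move=> hM hi hne nzi nzj.
have e : (l * (vp G`_i + vp H`_(M - i)) + k * M = wt i G`_i + wt (M - i) H`_(M - i))%N.
  rewrite /wt; move: (subnKC hi); move: (M - i)%N => u hu; rewrite -{1}hu; lia.
rewrite e.
case: (ltnP bG i) => hbi.
  have := maxG _ hbi nzi; have := minH _ nzj; lia.
have hj : (bH < M - i)%N.
  move: hne; case: (eqVneq i bG) => [-> /= hM'|hib _].
    have : (bG + bH < M)%N by rewrite ltn_neqAle eq_sym hM' hM.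
    lia.
  have : (i < bG)%N by rewrite ltn_neqAle hib hbi.
  lia.
have := maxH _ hj nzj; have := minG _ nzi; lia.
Qed.

Lemma coef_best :
  let N := (bG + bH)%N in
  (G * H)`_N != 0 /\ vp (G * H)`_N = (vp G`_bG + vp H`_bH)%N.
Proof.
move=> N; set e := (vp G`_bG + vp H`_bH)%N.
have hb : (bG < N.+1)%N by rewrite ltnS leq_addr.
rewrite coefM (bigD1 (Ordinal hb)) //=.
have hN : (N - bG = bH)%N by rewrite /N addKn.
rewrite hN.
have nzT : G`_bG * H`_bH != 0 by rewrite mulf_neq0.
have vT : vp (G`_bG * H`_bH) = e by rewrite vpM.
have rest : (((p ^ e.+1)%N)%:Z %| \sum_(i < N.+1 | i != Ordinal hb) G`_i * H`_(N - i))%Z.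
  apply: rpred_sum => i hi.
  have [->|nzi] := eqVneq G`_i 0; first by rewrite mul0r rpred0.
  have [->|nzj] := eqVneq H`_(N - i) 0; first by rewrite mulr0 rpred0.
  rewrite dvd_vp ?mulf_neq0 // vpM //.
  have hi' : (i != bG :> nat) by apply: contra hi => /eqP h; apply/eqP/val_inj.
  have := term_bound N i (leqnn N) (ltnSE (ltn_ord i)) (introT orP (or_introl hi')) nzi nzj.
  rewrite /wt; nia.
have nd : ~~ (((p ^ e.+1)%N)%:Z %| G`_bG * H`_bH + \sum_(i < N.+1 | i != Ordinal hb) G`_i * H`_(N - i))%Z.
  rewrite rpredDr // dvd_vp // vT; lia.
have nz : G`_bG * H`_bH + \sum_(i < N.+1 | i != Ordinal hb) G`_i * H`_(N - i) != 0.
  by apply: contra nd => /eqP ->; rewrite rpred0.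
split => //.
have d1 : (((p ^ e)%N)%:Z %| G`_bG * H`_bH + \sum_(i < N.+1 | i != Ordinal hb) G`_i * H`_(N - i))%Z.
  apply: rpredD; first by rewrite dvd_vp // vT.
  move: rest; rewrite !dvdzE /=; apply: dvdn_trans; rewrite dvdn_exp2l //.
move: nd d1; rewrite !dvd_vp //; rewrite -leqNgt => a b; apply/anti_leq; by rewrite a b.
Qed.

Lemma coef_above M c : (bG + bH < M)%N ->
  (c * l + k * M <= wt bG G`_bG + wt bH H`_bH)%N ->
  (((p ^ c.+1)%N)%:Z %| (G * H)`_M)%Z.
Proof.
move=> hM hc; rewrite coefM; apply: rpred_sum => i _.
have [->|nzi] := eqVneq G`_i 0; first by rewrite mul0r rpred0.
have [->|nzj] := eqVneq H`_(M - i) 0; first by rewrite mulr0 rpred0.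
rewrite dvd_vp ?mulf_neq0 // vpM //.
have hne : (i != bG :> nat) || (M != bG + bH)%N by apply/orP; right; rewrite neq_ltn hM orbT.
have := term_bound M i (ltnW hM) (ltnSE (ltn_ord i)) hne nzi nzj.
move: hc; nia.
Qed.

End Padic.


Lemma lerX (F : numDomainType) (a b : F) n : 0 <= a -> a <= b -> a ^+ n <= b ^+ n.
Proof. move=> a0 ab; apply: lerXn2r; rewrite // nnegrE (le_trans a0 ab) //. Qed.

Lemma transfer (F : numDomainType) (m j : nat) (x : nat -> F) (c al be A B : F) :
  (j <= m)%N -> (forall i, 0 <= x i) -> 0 < al -> al <= A -> 0 <= B -> B <= be ->
  be ^+ (m - j) * \sum_(i < m.+1 | i != j :> nat) x i * al ^+ i < c * al ^+ m ->
  B ^+ (m - j) * \sum_(i < m.+1 | i != j :> nat) x i * A ^+ i < c * A ^+ m.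
Proof.
move=> jm x0 al0 alA B0 Bbe H.
have A0 : 0 < A by apply: lt_le_trans alA.
have alm : 0 < al ^+ m by rewrite exprn_gt0.
rewrite -(ltr_pM2r alm).
apply: (le_lt_trans (y := A ^+ m * (be ^+ (m - j) * \sum_(i < m.+1 | i != j :> nat) x i * al ^+ i))).
  have eL : B ^+ (m - j) * (\sum_(i < m.+1 | i != j :> nat) x i * A ^+ i) * al ^+ m =
     \sum_(i < m.+1 | i != j :> nat) x i * (B ^+ (m - j) * A ^+ i * al ^+ m).
    by rewrite big_distrr big_distrl /=; apply: eq_bigr => i _; ring.
  have eR : A ^+ m * (be ^+ (m - j) * \sum_(i < m.+1 | i != j :> nat) x i * al ^+ i) =
     \sum_(i < m.+1 | i != j :> nat) x i * (A ^+ m * be ^+ (m - j) * al ^+ i).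
    by rewrite !big_distrr /=; apply: eq_bigr => i _; ring.
  rewrite eL eR; apply: ler_sum => i _; apply: ler_wpM2l => //.
  have im : (i <= m)%N by rewrite -ltnS.
  have eA : A ^+ m = A ^+ i * A ^+ (m - i) by rewrite -exprD subnKC.
  have eal : al ^+ m = al ^+ i * al ^+ (m - i) by rewrite -exprD subnKC.
  rewrite eA eal.
  have ->: B ^+ (m - j) * A ^+ i * (al ^+ i * al ^+ (m - i)) =
           (A ^+ i * al ^+ i) * (B ^+ (m - j) * al ^+ (m - i)) by ring.
  have ->: A ^+ i * A ^+ (m - i) * be ^+ (m - j) * al ^+ i =
           (A ^+ i * al ^+ i) * (be ^+ (m - j) * A ^+ (m - i)) by ring.
  apply: ler_wpM2l; first by rewrite mulr_ge0 // exprn_ge0 // ltW.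
  apply: ler_pM; rewrite ?exprn_ge0 ?(ltW al0) //; first by rewrite lerX.
  by rewrite lerX // ltW.
by rewrite (mulrC c) -mulrA ltr_pM2l // exprn_gt0.
Qed.
Arguments transfer {F m j x c al be A B}.

Lemma size_mapZ (F : numDomainType) (f : {poly int}) : size (map_poly (intr : int -> F) f) = size f.
Proof. by apply: size_map_inj_poly => //; apply: intr_inj. Qed.

Lemma ltr0Sn_helper (A : nat) : (0 < A)%N -> 0 < (A%:R : algC).
Proof. by rewrite ltr0n. Qed.

Lemma no_root_annulus (f : {poly int}) j (A B : nat) (t : algC) :
  f != 0 -> (j <= (size f).-1)%N -> (0 < A)%N ->
  (B ^ ((size f).-1 - j) * \sum_(i < (size f).-1.+1 | i != j :> nat) absz (f`_i)%R * A ^ i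
      < absz (f`_j)%R * A ^ (size f).-1)%N ->
  root (map_poly intr f) t -> `|t| < A%:R \/ B%:R < `|t|.
Proof.
set m := (size f).-1 => f0 jm A0 H rt.
have rr : `|t| \is Num.real by apply: normr_real.
case: (boolP (`|t| < A%:R)) => [h|]; first by left.
case: (boolP (B%:R < `|t|)) => [h|]; first by right.
rewrite !real_ltNge ?realn // !negbK => tB At; exfalso.
have r0 : 0 < `|t| by apply: lt_le_trans At; rewrite ltr0n.
have Hc : (B%:R : algC) ^+ (m - j) * \sum_(i < m.+1 | i != j :> nat) (absz f`_i)%:R * (A%:R) ^+ i
     < (absz f`_j)%:R * (A%:R) ^+ m.
  move: H; rewrite -(ltr_nat algC) !natrM !natrX natr_sum.
  by under eq_bigr do rewrite natrM natrX.
have := @transfer algC m j (fun i => (absz f`_i)%:R) _ _ _ _ _ jm (fun i => ler0n _ _) (ltr0Sn_helper _ A0) At (normr_ge0 _) tB Hc.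
have em : `|t| ^+ m = `|t| ^+ (m - j) * `|t| ^+ j by rewrite -exprD subnK.
rewrite em mulrA (mulrC _ (`|t| ^+ (m - j))) -mulrA ltr_pM2l ?exprn_gt0 //.
move=> hlt.
have sf : size f = m.+1 by rewrite prednK // size_poly_gt0.
move: rt; rewrite /root horner_coef size_mapZ sf.
have hj : (j < m.+1)%N by [].
rewrite (bigD1 (Ordinal hj)) //= coef_map /= addrC addr_eq0 => /eqP e.
have hle : (absz f`_j)%:R * `|t| ^+ j <=
    \sum_(i < m.+1 | i != j :> nat) (absz f`_i)%:R * `|t| ^+ i.
  have -> : (absz f`_j)%:R * `|t| ^+ j = `|(f`_j)%:~R * t ^+ j| :> algC.
    by rewrite normrM normrX natr_absz intr_norm.
  rewrite -normrN -e; apply: le_trans (ler_norm_sum _ _ _) _.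
  rewrite le_eqVlt; apply/orP; left; apply/eqP.
  apply: congr_big => // i.
  by move=> _; rewrite normrM normrX coef_map /= natr_absz intr_norm.
by have := lt_le_trans hlt hle; rewrite ltxx.
Qed.

Lemma prod_gt (d : algC) (s : seq algC) (F : algC -> algC) : 1 <= d -> s != [::] ->
  (forall z, z \in s -> d < F z) -> d < \prod_(z <- s) F z.
Proof.
move=> d1; elim: s => [//|a s IH] _ h.
rewrite big_cons.
have ha : d < F a by apply: h; rewrite mem_head.
have Fa0 : 0 <= F a by apply/ltW/(lt_trans _ ha)/(lt_le_trans ltr01 d1).
case: (eqVneq s [::]) => [->|sn]; first by rewrite big_nil mulr1.
have hp : d < \prod_(z <- s) F z by apply: IH => // z zs; apply: h; rewrite inE zs orbT.
apply: lt_le_trans ha _; rewrite -{1}(mulr1 (F a)); apply: ler_wpM2l => //.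
exact: ltW (le_lt_trans d1 hp).
Qed.

Lemma factor_big (f g h : {poly int}) j (n d : nat) :
  f = g * h -> f != 0 -> (1 < size g)%N -> (j <= (size f).-1)%N -> (0 < d)%N -> (d < n)%N ->
  ((n + d) ^ ((size f).-1 - j) * \sum_(i < (size f).-1.+1 | i != j :> nat) absz (f`_i)%R * (n - d) ^ i
      < absz (f`_j)%R * (n - d) ^ (size f).-1)%N ->
  (d < absz g.[n%:Z])%N.
Proof.
move=> fgh f0 sg jm d0 dn H.
pose g' := map_poly (intr : int -> algC) g.
have [rs grs] := closed_field_poly_normal g'.
have g0 : g != 0 by apply: contraTneq sg => ->; rewrite size_poly0.
have lc0 : lead_coef g' != 0 by rewrite lead_coef_eq0 -size_poly_eq0 size_mapZ size_poly_eq0.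
have rsn : rs != [::].
  apply: contraTneq sg => rs0.
  by rewrite -(size_mapZ algC) -/g' grs rs0 big_nil size_scale // size_poly1.
have hroot : forall z, z \in rs -> d%:R < `|n%:R - z|.
  move=> z zs.
  have rz : root (map_poly intr f) z.
    rewrite fgh rmorphM /= rootM; apply/orP; left.
    by rewrite -/g' grs /root hornerZ horner_prod (big_rem z zs) /= hornerXsubC subrr mul0r mulr0.
  have nd : (0 < n - d)%N by rewrite subn_gt0.
  case: (no_root_annulus _ _ _ _ _ f0 jm nd H rz) => hz.
    apply: (lt_le_trans _ (lerB_dist (n%:R) z)); rewrite normr_nat ltrBrDr.
    by move: hz; rewrite (natrB _ (ltnW dn)) ltrBrDl.
  rewrite distrC; apply: (lt_le_trans _ (lerB_dist z (n%:R))); rewrite normr_nat ltrBrDr [d%:R + _]addrC.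
  by move: hz; rewrite natrD.
have hn : ((n%:Z)%:~R : algC) = n%:R by [].
have e : (absz g.[n%:Z])%:R = `|g'.[n%:R]| :> algC.
  by rewrite -hn horner_map /= natr_absz intr_norm.
rewrite -(ltr_nat algC) e grs hornerZ horner_prod normrM normr_prod.
have lc1 : 1 <= `|lead_coef g'|.
  rewrite /g' lead_coef_map_inj //; last exact: intr_inj.
  rewrite -intr_norm -natr_absz ler1n absz_gt0 lead_coef_eq0 //.
have hp : d%:R < \prod_(z <- rs) `|('X - z%:P).[n%:R]|.
  apply: prod_gt => //; first by rewrite ler1n.
  by move=> z zs; rewrite hornerXsubC; apply: hroot.
apply: (lt_le_trans hp); rewrite -{1}(mul1r (\prod_(z <- rs) _)).
apply: ler_wpM2r => //; apply: prodr_ge0 => z _; exact: normr_ge0.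
Qed.


Lemma absz1_unit (c : int) : absz c = 1%N -> c \is a GRing.unit.
Proof. by case: c => [[|[|?]]|[|?]]. Qed.

Lemma real_to_nat (R : realFieldType) (f : {poly int}) (alpha beta : R) j (n d : nat) :
  0 < alpha -> alpha < beta -> (j <= (size f).-1)%N ->
  `|f`_j|%:~R * alpha ^+ j >
    (beta / alpha) ^+ ((size f).-1 - j) *
      \sum_(i < (size f).-1.+1 | i != j :> nat) `|f`_i|%:~R * alpha ^+ i ->
  beta - d%:R >= n%:R -> n%:R >= alpha + d%:R ->
  (d < n)%N /\
  ((n + d) ^ ((size f).-1 - j) * \sum_(i < (size f).-1.+1 | i != j :> nat) absz (f`_i)%R * (n - d) ^ i
      < absz (f`_j)%R * (n - d) ^ (size f).-1)%N.
Proof.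
set m := (size f).-1 => a0 ab jm H hb ha.
have dn : (d < n)%N by rewrite -(ltr_nat R); lra.
split => //.
set S := \sum_(i < m.+1 | i != j :> nat) `|f`_i|%:~R * alpha ^+ i in H.
have H' : beta ^+ (m - j) * S < `|f`_j|%:~R * alpha ^+ m.
  have am : 0 < alpha ^+ (m - j) by rewrite exprn_gt0.
  move: H; rewrite -(ltr_pM2l am) mulrA -exprMn mulrCA divff ?gt_eqF // mulr1.
  by rewrite mulrCA -exprD subnK.
have hA : alpha <= (n - d)%:R by rewrite (natrB _ (ltnW dn)); lra.
have hB : (n + d)%:R <= beta by rewrite natrD; lra.
have := @transfer R m j (fun i => `|f`_i|%:~R) _ _ _ _ _ jm (fun i => ler0z _ _) a0 hA (ler0n _ _) hB H'.
rewrite -(ltr_nat R) natrM natrX natr_sum natrM natrX natr_absz.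
move=> h; suff -> : \sum_(i < m.+1 | i != j :> nat) ((absz f`_i) * (n - d) ^ i)%:R =
   \sum_(i < m.+1 | i != j :> nat) `|f`_i|%:~R * (n - d)%:R ^+ i :> R by exact: h.
by apply: eq_bigr => i _; rewrite natrM natrX natr_absz.
Qed.


Lemma prim_const (f h : {poly int}) (c : int) : primitive_int f -> f = c%:P * h -> absz c = 1%N.
Proof.
rewrite /primitive_int => pf fe; apply/eqP; rewrite -dvdn1 -pf.
apply: (big_ind (fun x => absz c %| x)%N) => //.
- by move=> x y hx hy; rewrite dvdn_gcd hx hy.
- move=> i _; have -> : f`_i = c * h`_i by move: (i : nat) => i0; rewrite fe coefCM.
  by rewrite abszM dvdn_mulr.
Qed.

Lemma final_arith (k l s t a b bG bH : nat) :
  (1 < k)%N -> (0 < l)%N -> coprime k l -> (1 <= s)%N -> (1 <= t)%N -> (s + t = k)%N ->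
  (l * a + k * bG <= l * s)%N -> (l * b + k * bH <= l * t)%N ->
  (bG + bH != 0)%N ->
  ((bG + bH < l)%N -> (k <= a + b)%N) -> False.
Proof.
move=> k1 l0 ckl s1 t1 st hG hH N0 hlt.
case: (ltngtP (bG + bH) l) => hN.
- have := hlt hN; nia.
- nia.
have ab : (a + b = 0)%N by nia.
have eG : (k * bG = l * s)%N by nia.
have : (k %| s)%N by rewrite -(Gauss_dvdr _ ckl); apply/dvdnP; exists bG; lia.
move=> /(dvdn_leq s1) => ks; lia.
Qed.

Lemma arith2 (k l s t : nat) : (s + t = k)%N -> (0 * l + k * l <= l * s + k * 0 + (l * t + k * 0))%N.
Proof. move=> st; nia. Qed.


Theorem theorem3 (R : realFieldType) (f : {poly int}) (alpha beta : R) (j : nat)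
  (n d k l p : nat) :
  primitive_int f ->
  0 < alpha -> alpha < beta ->
  (j <= (size f).-1)%N ->
  `|f`_j|%:~R * alpha ^+ j >
    (beta / alpha) ^+ ((size f).-1 - j) *
      \sum_(i < (size f).-1.+1 | i != j :> nat) `|f`_i|%:~R * alpha ^+ i ->
  (0 < n)%N -> (0 < d)%N -> (0 < k)%N -> (0 < l)%N -> (l <= (size f).-1)%N ->
  prime p -> ~~ (p %| d)%N ->
  beta - d%:R >= n%:R -> n%:R >= alpha + d%:R ->
  (f.[n%:Z] = (p ^ k * d)%:Z \/ f.[n%:Z] = - (p ^ k * d)%:Z) ->
  coprime k l ->
  (forall i : nat, (i < l)%N -> ((p ^ k)%:Z %| (f^`N(i)).[n%:Z])%Z) ->
  ((1 < k)%N -> ~~ ((p%:Z %| (f^`N(l)).[n%:Z])%Z)) ->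
  irreducible_Zpoly f.
Proof.
move=> pf a0 ab jm Hineq n0 d0 k0 l0 lm pp pd hb ha hfn ckl hdiv hnd.
have f0 : f != 0.
  by apply/negP => /eqP f0; move: pf; rewrite /primitive_int f0 size_poly0 big_ord0.
have sf : (1 < size f)%N by move: lm l0; case: (size f) => //= s; lia.
have [dn Hnat] := @real_to_nat R f alpha beta j n d a0 ab jm Hineq hb ha.
split => //.
  by rewrite poly_unitE negb_and; apply/orP; left; rewrite neq_ltn sf orbT.
move=> g h fgh.
case: (boolP (g \is a GRing.unit)) => gu; first by left.
case: (boolP (h \is a GRing.unit)) => hu; first by right.
exfalso.
have g0 : g != 0 by apply: contraNneq f0 => g0; rewrite fgh g0 mul0r.
have h0 : h != 0 by apply: contraNneq f0 => h0; rewrite fgh h0 mulr0.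
have fhg : f = h * g by rewrite fgh mulrC.
have nonconst : forall u v : {poly int}, f = u * v -> u != 0 -> u \isn't a GRing.unit -> (1 < size u)%N.
  move=> u v fuv u0 uu; rewrite ltnNge; apply/negP => su.
  apply: (negP uu); rewrite poly_unitE.
  have -> : size u == 1%N by rewrite eqn_leq su size_poly_gt0.
  apply: absz1_unit; apply: (prim_const f v _ pf).
  by rewrite fuv {1}(size1_polyC su).
have sg := nonconst g h fgh g0 gu.
have sH := nonconst h g fhg h0 hu.
have hg := factor_big f g h j n d fgh f0 sg jm d0 dn Hnat.
have hh := factor_big f h g j n d fhg f0 sH jm d0 dn Hnat.
set x := absz g.[n%:Z] in hg; set y := absz h.[n%:Z] in hh.
have xy : (x * y = p ^ k * d)%N.
  rewrite /x /y -abszM -hornerM -fgh.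
  by case: hfn => ->; rewrite ?abszN.
have pdiv : forall z w, (z * w = p ^ k * d)%N -> (d < z)%N -> (p %| z)%N.
  move=> z w zw dz; apply: contraT => npz.
  have cz : coprime z (p ^ k) by apply: coprimeXr; rewrite coprime_sym prime_coprime.
  have : (z %| p ^ k * d)%N by rewrite -zw dvdn_mulr.
  rewrite (Gauss_dvdr _ cz) => /(dvdn_leq d0) zd.
  by move: dz; rewrite ltnNge zd.
have px := pdiv x y xy hg.
have py : (p %| y)%N by apply: (pdiv y x) => //; rewrite mulnC.
have x0 : (0 < x)%N by apply: leq_ltn_trans hg.
have y0 : (0 < y)%N by apply: leq_ltn_trans hh.
have s1 : (1 <= logn p x)%N by rewrite -pfactor_dvdn // expn1.
have t1 : (1 <= logn p y)%N by rewrite -pfactor_dvdn // expn1.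
have st : (logn p x + logn p y = k)%N.
  have pk0 : (0 < p ^ k)%N by rewrite expn_gt0 prime_gt0.
  rewrite -lognM // xy (lognM _ pk0 d0) pfactorK //.
  by rewrite logn_coprime ?addn0 // prime_coprime.
have k1 : (1 < k)%N by rewrite -st; apply: (leq_add s1 t1).
have hF := hnd k1.
pose shp (q : {poly int}) := q \Po ('X + (n%:Z)%:P).
have FGH : shp f = shp g * shp h by rewrite /shp fgh comp_polyM.
have cF : forall i, (shp f)`_i = (f^`N(i)).[n%:Z] by move=> i; rewrite coef_shift.
have G0e : (shp g)`_0 = g.[n%:Z] by rewrite coef_shift nderivn0.
have H0e : (shp h)`_0 = h.[n%:Z] by rewrite coef_shift nderivn0.
have nzG0 : (shp g)`_0 != 0 by rewrite G0e -absz_gt0.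
have nzH0 : (shp h)`_0 != 0 by rewrite H0e -absz_gt0.
have Gn0 : shp g != 0 by apply: contraNneq nzG0 => ->; rewrite coef0.
have Hn0 : shp h != 0 by apply: contraNneq nzH0 => ->; rewrite coef0.
have [bG [nzG minG maxG]] := exists_best (shp g) (wt p k l) Gn0.
have [bH [nzH minH maxH]] := exists_best (shp h) (wt p k l) Hn0.
move: (@coef_best p k l pp (shp g) (shp h) bG bH nzG nzH minG minH maxG maxH) => /= [].
rewrite -FGH => nzN vN.
have hG := minG 0 nzG0.
have hH := minH 0 nzH0.
rewrite /wt G0e muln0 addn0 in hG.
rewrite /wt H0e muln0 addn0 in hH.
apply: (@final_arith k l (logn p x) (logn p y) _ _ bG bH k1 l0 ckl s1 t1 st hG hH).
  apply/negP; rewrite addn_eq0 => /andP [/eqP bG0 /eqP bH0].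
  have := @coef_above p k l pp (shp g) (shp h) bG bH nzG nzH minG minH maxG maxH l 0.
  rewrite -FGH cF expn1 => hc; apply: (negP hF); apply: hc.
    by rewrite bG0 bH0.
  rewrite bG0 bH0 /wt G0e H0e; exact: arith2 st.
move=> hN; have := hdiv _ hN.
by rewrite -cF dvd_vp // vN.
Qed.
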